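(* Let $k\ge 1$ and let $n,n_1,\dots,n_k\ge 1$ be integers; set $m=n+\sum_{j=1}^k n_j$. Define $\varphi(a)=(1-a)^k-\frac{a(m-n)+n}{m}$ for $0\le a\le 1$, and let $a_0\in(0,1)$ be the number such that $\varphi(a_0)=0$ and $\varphi(a)>0$ for all $a\in[0,a_0)$. Let $0<a\le a_0$, and let $z_1,\dots,z_k\in\mathbb{C}$ be pairwise distinct with $|z_j|\le 1$ and $z_j\neq a$ for $j=1,\dots,k$. Let $$p(z)=(z-a)^n\prod_{j=1}^{k}(z-z_j)^{n_j},\quad z\in\mathbb{C}.$$ Then there exists $\zeta\neq a$ such that $p'(\zeta)=0$ and $|a-\zeta|\le 1$.
   Context: The number $a_0$ exists since $\varphi(0)=(m-n)/m>0$ and $\varphi(1)=-1<0$; it is the smallest zero of $\varphi$ in $(0,1)$. *)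

(* Defs.v *)
From HB Require Import structures.
From mathcomp Require Import all_boot all_order all_algebra.
From mathcomp Require Import reals complex.
Set Implicit Arguments. Unset Strict Implicit. Unset Printing Implicit Defensive.
Import Order.TTheory GRing.Theory Num.Theory.
Local Open Scope ring_scope.

Definition mtot (k n : nat) (nn : 'I_k -> nat) : nat := (n + \sum_(j < k) nn j)%N.

Definition phi (R : realType) (k n : nat) (nn : 'I_k -> nat) (a : R) : R :=
  (1 - a) ^+ k - (a * ((mtot n nn)%:R - n%:R) + n%:R) / (mtot n nn)%:R.

Definition ppoly (R : realType) (k n : nat) (nn : 'I_k -> nat)
  (a : R[i]) (z : 'I_k -> R[i]) : {poly R[i]} :=
  ('X - a%:P) ^+ n * \prod_(j < k) ('X - (z j)%:P) ^+ (nn j).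

(* Main.v *)
Require Import Defs.
From HB Require Import structures.
From mathcomp Require Import all_boot all_order all_algebra.
From mathcomp Require Import reals complex ring lra.
Import Order.TTheory GRing.Theory Num.Theory.
Set Implicit Arguments. Unset Strict Implicit. Unset Printing Implicit Defensive.
Local Open Scope ring_scope.

Section Gen.
Variable F : comNzRingType.
Implicit Types s : seq (F * nat).

Definition Lp s := \prod_(x <- s) ('X - x.1%:P).
Definition Fp s := \prod_(x <- s) ('X - x.1%:P) ^+ x.2.
Definition Gp s := \prod_(x <- s) ('X - x.1%:P) ^+ x.2.-1.
Fixpoint Hp s : {poly F} :=
  if s is x :: s' then Lp s' *+ x.2 + ('X - x.1%:P) * Hp s' else 0.
Definition sumE s := sumn (map snd s).

Lemma Fp_GL s : all (fun x => 0 < x.2)%N s -> Fp s = Gp s * Lp s.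
Proof.
elim: s => [|x s IH] /=; first by rewrite /Fp /Gp /Lp !big_nil mulr1.
case/andP=> hx /IH hs; rewrite /Fp /Gp /Lp !big_cons -/(Fp s) -/(Gp s) -/(Lp s) hs.
case: x hx => c [|e] //= _; rewrite exprS; ring.
Qed.

Lemma deriv_Fp s : all (fun x => 0 < x.2)%N s -> (Fp s)^`() = Gp s * Hp s.
Proof.
elim: s => [|x s IH] /=; first by rewrite /Fp /Gp !big_nil derivC mul1r.
case/andP=> hx hs; rewrite /Fp /Gp !big_cons -/(Fp s) -/(Gp s).
rewrite derivM IH // deriv_exp derivXsubC Fp_GL //.
case: x hx => c [|e] //= _; rewrite exprS; ring.
Qed.

Lemma size_Hp s : (size (Hp s) <= size s)%N.
Proof.
elim: s => [|x s IH] /=; first by rewrite size_poly0.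
apply: (leq_trans (size_polyD _ _)); rewrite geq_max; apply/andP; split.
  rewrite -scaler_nat; apply: (leq_trans (size_scale_leq _ _)).
  by rewrite /Lp size_prod_XsubC.
apply: (leq_trans (size_polyMleq _ _)); rewrite size_XsubC /=.
by rewrite ltnS.
Qed.

Lemma coef_Hp s : (Hp s)`_(size s).-1 = (sumE s)%:R.
Proof.
elim: s => [|x s IH] /=; first by rewrite coef0.
rewrite /sumE /= -/(sumE s) coefD coefMn mulrBl coefB coefXM.
have hL : (Lp s)`_(size s) = 1.
  have := monic_prod_XsubC s xpredT (fun x : F * nat => x.1); rewrite /Lp => /monicP.
  by rewrite /lead_coef size_prod_XsubC.
rewrite hL [_ * Hp s]mulrC coefMC.
rewrite [(Hp s)`_(size s)]nth_default ?size_Hp // mul0r subr0.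
case: s IH {hL} => [|y s] /= IH.
  by rewrite addr0 /sumE /= addn0.
by rewrite IH natrD.
Qed.
End Gen.

Section Num.
Variable C : numDomainType.
Implicit Types s : seq (C * nat).

Lemma Lp0_bound s : all (fun x => `|x.1| <= 1) s -> `|(Lp s).[0]| <= 1.
Proof.
rewrite /Lp horner_prod normr_prod.
elim: s => [|x s IH] /=; first by rewrite big_nil.
case/andP=> hx /IH hs; rewrite big_cons hornerXsubC sub0r normrN.
apply: mulr_ile1 => //; apply: prodr_ge0 => *; exact: normr_ge0.
Qed.

Lemma Hp0_bound s : all (fun x => `|x.1| <= 1) s -> `|(Hp s).[0]| <= (sumE s)%:R.
Proof.
elim: s => [|x s IH] /=; first by rewrite horner0 normr0 /sumE.
case/andP=> hx hs; rewrite hornerD hornerMn hornerM hornerXsubC sub0r.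
rewrite /sumE /= -/(sumE s) natrD.
apply: (le_trans (ler_normD _ _)); apply: lerD.
  by rewrite normrMn lerMn2r Lp0_bound ?orbT.
rewrite normrM normrN -[(sumE s)%:R]mul1r; apply: ler_pM => //.
all: try exact: IH hs.
Qed.

Lemma prod_lb (r : seq C) b : 0 < b -> (forall w, w \in r -> b < `|w|) ->
  b ^+ size r <= \prod_(w <- r) `|w|.
Proof.
move=> b0; elim: r => [|w r IH] hr /=; first by rewrite big_nil expr0.
rewrite big_cons exprS; apply: ler_pM.
- exact: ltW.
- by rewrite exprn_ge0 // ltW.
- by apply: ltW; apply: hr; rewrite inE eqxx.
- by apply: IH => x xr; apply: hr; rewrite inE xr orbT.
Qed.

Lemma prod_lt (r : seq C) b : 0 < b -> (forall w, w \in r -> b < `|w|) ->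
  r != [::] -> b ^+ size r < \prod_(w <- r) `|w|.
Proof.
move=> b0 hr; case: r hr => [|w r] hr // _ /=.
have hP : b ^+ size r <= \prod_(x <- r) `|x|.
  by apply: prod_lb => // x xr; apply: hr; rewrite inE xr orbT.
have Pgt0 : 0 < \prod_(x <- r) `|x| by apply: lt_le_trans hP; rewrite exprn_gt0.
rewrite big_cons exprS; apply: (le_lt_trans (y := b * \prod_(x <- r) `|x|)).
  by rewrite ler_pM2l.
by rewrite ltr_pM2r //; apply: hr; rewrite inE eqxx.
Qed.
End Num.

Lemma eR_lem (R : realType) (a : R) (N M : nat) :
  (N%:R + (a%:C)%C * (M%:R - N%:R) : R[i]) = ((N%:R + a * (M%:R - N%:R))%:C)%C.
Proof. by rewrite rmorphD rmorphM rmorphB !rmorph_nat. Qed.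

Theorem theorem2 (R : realType) (k n : nat) (nn : 'I_k -> nat)
  (a0 a : R) (z : 'I_k -> R[i]) :
  (1 <= k)%N -> (1 <= n)%N -> (forall j, (1 <= nn j)%N) ->
  0 < a0 < 1 ->
  phi n nn a0 = 0 ->
  (forall b : R, 0 <= b < a0 -> 0 < phi n nn b) ->
  0 < a <= a0 ->
  injective z ->
  (forall j, `|z j| <= 1) ->
  (forall j, z j != (a%:C)%C) ->
  exists zeta : R[i], [/\ zeta != (a%:C)%C,
      ((ppoly n nn (a%:C)%C z)^`()).[zeta] = 0 &
      `|(a%:C)%C - zeta| <= 1].
Proof.
move=> k1 n1 nn1 /andP[a00 a01] phia0 phib /andP[a0' aa0] _ zle1 zna.
set s' : seq (R[i] * nat) := [seq ((z j), nn j) | j <- index_enum 'I_k].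
set s := ((a%:C)%C, n) :: s'.
have Pdef : ppoly n nn (a%:C)%C z = Fp s.
  by rewrite /ppoly /Fp big_cons /= big_map.
have hall : all (fun x => 0 < x.2)%N s.
  by rewrite /= n1 all_map; apply/allP => j _ /=; exact: nn1.
set q := Hp s.
have dP : (ppoly n nn (a%:C)%C z)^`() = Gp s * q by rewrite Pdef deriv_Fp.
have qa : q.[(a%:C)%C] != 0.
  rewrite /q /= hornerD hornerMn hornerM hornerXsubC subrr mul0r addr0.
  rewrite mulrn_eq0 negb_or -lt0n n1 /= /Lp horner_prod prodf_seq_neq0.
  by rewrite all_map; apply/allP => j _ /=; rewrite hornerXsubC subr_eq0 eq_sym.
have hsize : size s = k.+1.
  by rewrite /= size_map; congr (_.+1); rewrite -[RHS](card_ord k) -sum1_size sum1_card.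
have hsum : sumE s' = (mtot n nn - n)%N.
  by rewrite /mtot addKn /sumE -map_comp sumnE big_map.
have mn : (n <= mtot n nn)%N by rewrite /mtot leq_addr.
have hsumS : sumE s = mtot n nn by rewrite /sumE /= -/(sumE s') hsum subnKC.
have m0 : (mtot n nn)%:R != 0 :> R[i] by rewrite pnatr_eq0 -lt0n (leq_trans n1).
have qk : q`_k = (mtot n nn)%:R by rewrite /q -hsumS -coef_Hp hsize.
have sq : size q = k.+1.
  apply/eqP; rewrite eqn_leq -{1}hsize size_Hp /=; rewrite ltnNge; apply/negP => hq.
  by move: m0; rewrite -qk nth_default // eqxx.
have lq : lead_coef q = (mtot n nn)%:R by rewrite /lead_coef sq.
have [r Dq] := closed_field_poly_normal q.
have lq0 : lead_coef q != 0 by rewrite lq.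
have hr : size r = k.
  have := congr1 (fun p : {poly R[i]} => size p) Dq => /=.
  by rewrite size_scale // size_prod_XsubC sq => -[].
case: (boolP (has (fun w => `|(a%:C)%C - w| <= 1) r)).
  case/hasP => w wr hw.
  have qw : q.[w] = 0.
    by apply/eqP; rewrite -/(root q w) Dq rootZ // root_prod_XsubC.
  exists w; split => //.
  - by apply/eqP => wa; move: qa; rewrite -wa qw eqxx.
  - by rewrite dP hornerM qw mulr0.
move/hasPn => hn.
have a0C : 0 < (a%:C)%C by rewrite ltcE /= eqxx a0'.
have normA : `|(a%:C)%C| = (a%:C)%C by rewrite ger0_norm // ltW.
have eb : 1 - (a%:C)%C = ((1 - a)%:C)%C by rewrite rmorphB rmorph1.
have b0 : 0 < 1 - (a%:C)%C by rewrite eb ltcE /= eqxx subr_gt0 (le_lt_trans aa0).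
have hw : forall w, w \in r -> 1 - (a%:C)%C < `|w|.
  move=> w wr; have := hn w wr; rewrite -real_ltNge ?normr_real ?real1 // => h1.
  rewrite ltrBlDl -normA; apply: (lt_le_trans h1); exact: ler_normB.
have lower : (1 - (a%:C)%C) ^+ k < \prod_(w <- r) `|w|.
  rewrite -hr; apply: prod_lt => //.
  by rewrite -size_eq0 hr -lt0n.
have q0 : `|q.[0]| = (mtot n nn)%:R * \prod_(w <- r) `|w|.
  rewrite Dq hornerZ horner_prod normrM normr_prod lq normr_nat; congr (_ * _).
  by apply: eq_bigr => w _; rewrite hornerXsubC sub0r normrN.
have alls : all (fun x => `|x.1| <= 1) s'.
  by rewrite all_map; apply/allP => j _ /=; exact: zle1.
have upper : `|q.[0]| <= n%:R + (a%:C)%C * (sumE s')%:R.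
  rewrite /q /= hornerD hornerMn hornerM hornerXsubC sub0r.
  apply: (le_trans (ler_normD _ _)); apply: lerD.
    by rewrite normrMn lerMn2r Lp0_bound ?orbT.
  by rewrite normrM normrN normA ler_pM2l // Hp0_bound.
have key : (mtot n nn)%:R * (1 - (a%:C)%C) ^+ k < n%:R + (a%:C)%C * (sumE s')%:R.
  rewrite q0 in upper; apply: (lt_le_trans _ upper).
  by rewrite ltr_pM2l // lt0r m0 ler0n.
have eL : (mtot n nn)%:R * ((1 - a)%:C)%C ^+ k = (((mtot n nn)%:R * (1 - a) ^+ k)%:C)%C.
  by rewrite rmorphM rmorphXn rmorph_nat.
have eR : n%:R + (a%:C)%C * ((mtot n nn)%:R - n%:R) = ((n%:R + a * ((mtot n nn)%:R - n%:R))%:C)%C.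
  exact: eR_lem.
rewrite hsum natrB // eb eL eR ltcR in key.
have phia : 0 <= phi n nn a.
  move: aa0; rewrite le_eqVlt => /orP [/eqP -> | lt]; first by rewrite phia0.
  by apply: ltW; apply: phib; rewrite lt andbT ltW.
have m0R : 0 < (mtot n nn)%:R :> R by rewrite ltr0n (leq_trans n1).
move: phia; rewrite /phi subr_ge0 ler_pdivrMr // => h.
by move: key; rewrite ltNge [X in X <= _]addrC [X in _ <= X]mulrC h.
Qed.
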